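(* Let $G$ be a simple graph. The spectrum of the adjacency matrix of the triangular signed graph $G_{\vartriangle}$ does not depend on the chosen orientation of $G$ (of its edges and triangles).
   Context: Each edge of $G$ is oriented and each triangle $\vartriangle$ of $G$ is given a cyclic orientation; for an edge $e$ of $\vartriangle$ write $e\in\vartriangle^+$ if the orientation of $e$ agrees with that of $\vartriangle$ and $e\in\vartriangle^-$ otherwise. The triangular signed graph $G_{\vartriangle}$ has the triangles of $G$ as vertices; two distinct triangles $\vartriangle_1,\vartriangle_2$ sharing an edge $e$ are joined by a positive edge if $e\in\vartriangle_1^+\cap\vartriangle_2^+$ or $e\in\vartriangle_1^-\cap\vartriangle_2^-$, and by a negative edge otherwise; triangles sharing no edge are non-adjacent. Its adjacency matrix has entry $1$ for positive edges, $-1$ for negative edges and $0$ elsewhere. *)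

(* Defs.v *)
From mathcomp Require Import all_boot all_order all_algebra.
Set Implicit Arguments. Unset Strict Implicit. Unset Printing Implicit Defensive.
Import Order.TTheory GRing.Theory Num.Theory.
Local Open Scope ring_scope.

Section TriangularSignedGraph.
Variables (V : finType) (e : rel V).

Definition is_triangle (T : {set V}) : bool :=
  (#|T| == 3)%N && [forall u in T, forall v in T, (u != v) ==> e u v].

Definition triangles : {set {set V}} := [set T | is_triangle T].

(* edge orientation: o u v means the edge {u,v} is oriented u -> v *)
Definition edge_orientation (o : rel V) : Prop :=
  forall u v, e u v -> o u v != o v u.

(* cyclic orientation of each triangle: ct T u v means u -> v follows the
   cyclic orientation of T *)
Definition triangle_orientation (ct : {set V} -> rel V) : Prop :=
  forall T, T \in triangles ->
    (forall u v, u \in T -> v \in T -> u != v -> ct T u v != ct T v u) /\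
    (forall u v w, u \in T -> v \in T -> w \in T ->
       u != v -> v != w -> w != u -> ct T u v -> ct T v w -> ct T w u).

(* the oriented edge u -> v belongs to T^+ (agrees with T's orientation) *)
Definition in_plus (o : rel V) (ct : {set V} -> rel V) (T : {set V}) (u v : V)
  : bool := o u v == ct T u v.

Definition tri_sign (R : numDomainType) (o : rel V) (ct : {set V} -> rel V)
  (T1 T2 : {set V}) : R :=
  if (T1 != T2) && (#|T1 :&: T2| == 2)%N then
    (if [exists u, exists v, [&& u \in T1 :&: T2, v \in T1 :&: T2, u != v,
            o u v & in_plus o ct T1 u v == in_plus o ct T2 u v]]
     then 1 else -1)
  else 0.

Definition tri_adj (R : numDomainType) (o : rel V) (ct : {set V} -> rel V)
  : 'M[R]_#|triangles| :=
  \matrix_(i, j) tri_sign R o ct (enum_val i) (enum_val j).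

End TriangularSignedGraph.

(* Main.v *)
Require Import Defs.
From mathcomp Require Import all_boot all_order all_algebra.
Import GRing.Theory Num.Theory.
Local Open Scope ring_scope.
Set Implicit Arguments.

Lemma flipb (x1 y1 x2 y2 : bool) : x1 != y1 -> x2 != y2 -> (y1 == y2) = (x1 == x2).
Proof. by case: x1; case: y1; case: x2; case: y2. Qed.

Lemma neqC {T : eqType} {x y : T} : x != y -> y != x.
Proof. by rewrite eq_sym. Qed.

Lemma cyc_L1 (V : finType) (c : rel V) (T : {set V})
  (hA : forall u v, u \in T -> v \in T -> u != v -> c u v != c v u)
  (hC : forall u v w, u \in T -> v \in T -> w \in T ->
       u != v -> v != w -> w != u -> c u v -> c v w -> c w u)
  u v w : u \in T -> v \in T -> w \in T -> u != v -> v != w -> w != u ->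
  c u v -> c v w.
Proof.
move=> uT vT wT uv vw wu cuv; apply/negPn/negP => nvw.
have cwv : c w v by move: (hA v w vT wT vw); rewrite (negbTE nvw); case: (c w v).
case cwu: (c w u).
  by move: (hC w u v wT uT vT wu uv vw cwu cuv); rewrite (negbTE nvw).
have cuw : c u w by move: (hA w u wT uT wu); rewrite cwu; case: (c u w).
have cvu := hC u w v uT wT vT ((neqC wu)) ((neqC vw)) ((neqC uv)) cuw cwv.
by move: (hA u v uT vT uv); rewrite cuv cvu.
Qed.

Arguments cyc_L1 {V c T} hA hC {u v w}.

Definition cyc (V : finType) (c : rel V) (T : {set V}) : Prop :=
    (forall u v, u \in T -> v \in T -> u != v -> c u v != c v u) /\
    (forall u v w, u \in T -> v \in T -> w \in T ->
       u != v -> v != w -> w != u -> c u v -> c v w -> c w u).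

Lemma cyc_L2 (V : finType) (c : rel V) (T : {set V}) (h : cyc c T)
  u v w : u \in T -> v \in T -> w \in T -> u != v -> v != w -> w != u ->
  c u v = c v w.
Proof.
case: h => hA hC uT vT wT uv vw wu; apply/idP/idP; first exact: (cyc_L1 hA hC uT vT wT uv vw wu).
move=> cvw; apply/negPn/negP => ncuv.
have cvu : c v u by move: (hA u v uT vT uv); rewrite (negbTE ncuv); case: (c v u).
have cuw := cyc_L1 hA hC vT uT wT (neqC uv) (neqC wu) (neqC vw) cvu.
have cwv := cyc_L1 hA hC uT wT vT (neqC wu) (neqC vw) (neqC uv) cuw.
by move: (hA v w vT wT vw); rewrite cvw cwv.
Qed.

Definition agr (V : finType) (c1 c2 : rel V) u v := (c1 u v == c2 u v).
Arguments agr {V}.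

Arguments cyc {V}.

Lemma agr_sym (V : finType) (c1 c2 : rel V) (T : {set V}) (h1 : cyc c1 T) (h2 : cyc c2 T)
  u v : u \in T -> v \in T -> u != v -> agr c1 c2 v u = agr c1 c2 u v.
Proof.
move=> uT vT uv; apply: flipb; [exact: h1.1 | exact: h2.1].
Qed.

Lemma agr_cyc (V : finType) (c1 c2 : rel V) (T : {set V}) (h1 : cyc c1 T) (h2 : cyc c2 T)
  u v w : u \in T -> v \in T -> w \in T -> u != v -> v != w -> w != u ->
  agr c1 c2 u v = agr c1 c2 v w.
Proof.
by move=> uT vT wT uv vw wu; rewrite /agr (cyc_L2 h1 uT vT wT) // (cyc_L2 h2 uT vT wT).
Qed.

Lemma card4 (V : finType) (T : {set V}) u v x y :
  u \in T -> v \in T -> x \in T -> y \in T ->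
  u != v -> u != x -> u != y -> v != x -> v != y -> x != y -> (3 < #|T|)%N.
Proof.
move=> uT vT xT yT uv ux uy vx vy xy.
have sub : y |: (x |: (v |: [set u])) \subset T.
  by apply/subsetP => z; rewrite !inE => /orP [/eqP->|/orP [/eqP->|/orP[/eqP->|/eqP->]]].
apply: leq_trans (subset_leq_card sub).
by rewrite !cardsU1 cards1 !inE !negb_or (neqC xy) (neqC vy) (neqC uy) (neqC vx) (neqC ux) (neqC uv).
Qed.

Lemma agr_const (V : finType) (c1 c2 : rel V) (T : {set V}) (h1 : cyc c1 T) (h2 : cyc c2 T)
  (hT : #|T| = 3%N) u v x y : u \in T -> v \in T -> x \in T -> y \in T ->
  u != v -> x != y -> agr c1 c2 x y = agr c1 c2 u v.
Proof.
move=> uT vT xT yT uv xy.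
have S := agr_sym h1 h2; have C := agr_cyc h1 h2.
case: (eqVneq x u) => [exu | nxu].
  subst x; case: (eqVneq y v) => [-> // | nyv].
  by rewrite -(S _ _ uT yT xy) (C _ _ _ yT uT vT (neqC xy) uv (neqC nyv)).
case: (eqVneq x v) => [exv | nxv].
  subst x; case: (eqVneq y u) => [-> | nyu]; first by rewrite S.
  by rewrite (C _ _ _ uT vT yT uv xy nyu).
case: (eqVneq y u) => [eyu | nyu].
  subst y; by rewrite (C _ _ _ uT vT xT uv (neqC nxv) nxu) (C _ _ _ vT xT uT (neqC nxv) nxu uv).
case: (eqVneq y v) => [eyv | nyv].
  subst y; by rewrite (S _ _ vT xT (neqC nxv)) (C _ _ _ uT vT xT uv (neqC nxv) nxu).
have := card4 uT vT xT yT uv (neqC nxu) (neqC nyu) (neqC nxv) (neqC nyv) xy.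
by rewrite hT.
Qed.

Definition agree (V : finType) (c1 c2 : rel V) (T : {set V}) : bool :=
  [forall u in T, forall v in T, (u != v) ==> agr c1 c2 u v].

Lemma agreeE (V : finType) (c1 c2 : rel V) (T : {set V}) (h1 : cyc c1 T) (h2 : cyc c2 T)
  (hT : #|T| = 3%N) u v : u \in T -> v \in T -> u != v -> agr c1 c2 u v = agree c1 c2 T.
Proof.
move=> uT vT uv; case hA: (agree c1 c2 T).
  by move/forallP: hA => /(_ u); rewrite uT /= => /forallP /(_ v); rewrite vT uv.
move/negbT: hA => /forallPn [x]; rewrite negb_imply => /andP [xT /forallPn [y]].
rewrite negb_imply => /andP [yT]; rewrite negb_imply => /andP [xy ng].
by rewrite -(agr_const h1 h2 hT uT vT xT yT uv xy) (negbTE ng).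
Qed.

Lemma tri_facts (V : finType) (e : rel V) (ct : {set V} -> rel V)
  (hct : triangle_orientation e ct) T : T \in triangles e ->
  [/\ #|T| = 3%N, cyc (ct T) T &
      forall u v, u \in T -> v \in T -> u != v -> e u v].
Proof.
move=> hT; have hc := hct T hT; move: hT; rewrite inE => /andP [/eqP h3 /forallP he].
split => // u v uT vT uv; move: (he u); rewrite uT /= => /forallP /(_ v).
by rewrite vT uv.
Qed.

Lemma ex_sign (V : finType) (e : rel V) (o : rel V) (ct : {set V} -> rel V)
  T1 T2 a b : edge_orientation e o -> triangle_orientation e ct ->
  T1 \in triangles e -> T2 \in triangles e -> a != b -> T1 :&: T2 = [set a; b] ->
  [exists u, exists v, [&& u \in T1 :&: T2, v \in T1 :&: T2, u != v,
            o u v & in_plus o ct T1 u v == in_plus o ct T2 u v]]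
  = (ct T1 a b == ct T2 a b).
Proof.
move=> ho hct hT1 hT2 ab hI.
have [_ [c1 _] e1] := tri_facts hct hT1.
have [_ [c2 _] _] := tri_facts hct hT2.
have : a \in T1 :&: T2 by rewrite hI !inE eqxx.
have : b \in T1 :&: T2 by rewrite hI !inE eqxx orbT.
rewrite !inE => /andP [bT1 bT2] /andP [aT1 aT2].
have fl : (ct T1 b a == ct T2 b a) = (ct T1 a b == ct T2 a b).
  by apply: flipb; [exact: c1 | exact: c2].
apply/existsP/idP.
  case=> u /existsP [v] /and5P [hu hv huv ouv]; rewrite /in_plus ouv.
  rewrite hI !inE in hu hv.
  case/orP: hu => /eqP eu; case/orP: hv => /eqP ev; subst u v; rewrite ?eqxx // in huv.
    by case: (ct T1 a b); case: (ct T2 a b).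
  by rewrite -fl; case: (ct T1 b a); case: (ct T2 b a).
move=> h; have := ho a b (e1 a b aT1 bT1 ab); case oab: (o a b) => hneq.
  exists a; apply/existsP; exists b; rewrite /in_plus oab hI !inE !eqxx orbT ab /=.
  by move: h; case: (ct T1 a b); case: (ct T2 a b).
have oba : o b a by move: hneq; case: (o b a).
exists b; apply/existsP; exists a; rewrite /in_plus oba hI !inE !eqxx orbT (neqC ab) /=.
by move: h; rewrite -fl; case: (ct T1 b a); case: (ct T2 b a).
Qed.

Definition sgn (R : numDomainType) (V : finType) (ct1 ct2 : {set V} -> rel V)
  (T : {set V}) : R := if agree (ct1 T) (ct2 T) T then 1 else -1.

Lemma sign_rel (R : numDomainType) (V : finType) (e : rel V)
  (o1 o2 : rel V) (ct1 ct2 : {set V} -> rel V)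
  (ho1 : edge_orientation e o1) (ho2 : edge_orientation e o2)
  (hct1 : triangle_orientation e ct1) (hct2 : triangle_orientation e ct2)
  T1 T2 : T1 \in triangles e -> T2 \in triangles e ->
  tri_sign R o2 ct2 T1 T2 = sgn R ct1 ct2 T1 * tri_sign R o1 ct1 T1 T2 * sgn R ct1 ct2 T2.
Proof.
move=> hT1 hT2; rewrite /tri_sign.
case: ifP => [/andP [ne /cards2P [a [b [ab hI]]]] | _]; last by rewrite mulr0 mul0r.
rewrite (ex_sign ho1 hct1 hT1 hT2 ab hI) (ex_sign ho2 hct2 hT1 hT2 ab hI).
have : a \in T1 :&: T2 by rewrite hI !inE eqxx.
have : b \in T1 :&: T2 by rewrite hI !inE eqxx orbT.
rewrite !inE => /andP [bT1 bT2] /andP [aT1 aT2].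
have [h31 c11 _] := tri_facts hct1 hT1.
have [_ c21 _] := tri_facts hct2 hT1.
have [h32 c12 _] := tri_facts hct1 hT2.
have [_ c22 _] := tri_facts hct2 hT2.
rewrite /sgn -(agreeE c11 c21 h31 aT1 bT1 ab) -(agreeE c12 c22 h32 aT2 bT2 ab) /agr.
by case: (ct1 T1 a b); case: (ct2 T1 a b); case: (ct1 T2 a b); case: (ct2 T2 a b);
  rewrite /= ?mulr1 ?mul1r ?mulN1r ?mulrN1 ?opprK.
Qed.

Lemma char_poly_conj_inv (R : comNzRingType) n (A D : 'M[R]_n) :
  D *m D = 1%:M -> char_poly (D *m A *m D) = char_poly A.
Proof.
move=> DD; rewrite /char_poly /char_poly_mx.
set P := map_mx polyC D.
have PP : P *m P = 1%:M by rewrite -map_mxM DD map_scalar_mx /= polyC1.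
have -> : 'X%:M - map_mx polyC (D *m A *m D) = P *m ('X%:M - map_mx polyC A) *m P.
  by rewrite !map_mxM mulmxBr mulmxBl -/P scalar_mxC -[('X%:M *m P) *m P]mulmxA PP mulmx1.
by rewrite !det_mulmx mulrC mulrA -det_mulmx PP det1 mul1r.
Qed.

Unset Implicit Arguments.

Theorem corollary5p2 (R : numDomainType) (V : finType) (e : rel V)
  (e_sym : symmetric e) (e_irr : irreflexive e)
  (o1 o2 : rel V) (ct1 ct2 : {set V} -> rel V)
  (ho1 : edge_orientation e o1) (ho2 : edge_orientation e o2)
  (hct1 : triangle_orientation e ct1) (hct2 : triangle_orientation e ct2) :
  char_poly (tri_adj e R o1 ct1) = char_poly (tri_adj e R o2 ct2).
Proof.
pose d := \row_(i < #|triangles e|) sgn R ct1 ct2 (enum_val i).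
pose D := diag_mx d.
have DD : D *m D = 1%:M.
  apply/matrixP => i j; rewrite mul_diag_mx !mxE.
  case: eqVneq => [->|_] /=; last by rewrite mulr0.
  by rewrite /sgn; case: agree; rewrite ?mulr1 ?mulrNN ?mulr1.
have -> : tri_adj e R o2 ct2 = D *m tri_adj e R o1 ct1 *m D.
  apply/matrixP => i j; rewrite mul_mx_diag mul_diag_mx !mxE.
  exact: (sign_rel R ho1 ho2 hct1 hct2 (enum_valP i) (enum_valP j)).
by rewrite char_poly_conj_inv.
Qed.
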